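(* Let $(x,q)\in\mathbf J$. Then: (i) for each positive integer $m$ there exists a neighborhood $\mathbf W\subset\mathbb R^2$ of $(x,q)$ such that $a_1(y,r)\ldots a_m(y,r)\ge a_1(x,q)\ldots a_m(x,q)$ (lexicographically) for all $(y,r)\in\mathbf W\cap\mathbf J$; (ii) if $(y_n,r_n)$ is a sequence in $\mathbf J$ converging to $(x,q)$ from below (i.e. $y_n\le x$ and $r_n\le q$ for all $n$), then the sequences $(a_i(y_n,r_n))_{i\ge1}$ converge coordinate-wise to $(a_i(x,q))_{i\ge1}$ as $n\to\infty$.
   Context: For real $q>1$ let $\lceil q\rceil$ be the smallest integer $\ge q$ and $A_q=\{0,\ldots,\lceil q\rceil-1\}$. Let $\mathbf J$ be the set of $(x,q)$ with $q>1$ and $x\in J_q:=[0,(\lceil q\rceil-1)/(q-1)]$ (equivalently, $x=\sum_{i\ge1}c_iq^{-i}$ for some digits $c_i\in A_q$). For $(x,q)\in\mathbf J$, the quasi-greedy expansion $(a_i(x,q))$ is: $0^\infty$ if $x=0$; if $x>0$, recursively $a_n(x,q)$ is the largest element of $A_q$ with $\sum_{i=1}^n a_i(x,q)q^{-i}<x$. Finite words of equal length are compared lexicographically. *)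

(* Defs.v *)
From Stdlib Require Import Reals Lra Lia ZArith List.
Open Scope R_scope.

(* ceiling: smallest integer >= q.  up z is the unique integer with z < up z <= z+1,
   so 1 - up(-q) is the least integer >= q. *)
Definition ceilR (q : R) : Z := (1 - up (- q))%Z.

(* largest digit of A_q = {0, ..., ceil q - 1} *)
Definition maxdig (q : R) : nat := Z.to_nat (ceilR q - 1).

Fixpoint best (k : nat) (s x q : R) (n : nat) : nat :=
  match k with
  | O => O
  | S k' => if Rlt_dec (s + INR k / q ^ n) x then k else best k' s x q n
  end.

(* partial sums sum_{i=1}^n a_i(x,q) q^{-i} of the quasi-greedy expansion (x > 0) *)
Fixpoint qg_sum (x q : R) (n : nat) : R :=
  match n with
  | O => 0
  | S n' => let s := qg_sum x q n' in
            s + INR (best (maxdig q) s x q (S n')) / q ^ (S n')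
  end.

(* quasi-greedy digit a_i(x,q), for i >= 1 (index 0 is unused, set to 0) *)
Definition qg (x q : R) (i : nat) : nat :=
  match i with
  | O => O
  | S n' => if Req_EM_T x 0 then O
            else best (maxdig q) (qg_sum x q n') x q (S n')
  end.

Definition inJ (x q : R) : Prop :=
  1 < q /\ 0 <= x /\ x <= (IZR (ceilR q) - 1) / (q - 1).

Definition qg_word (x q : R) (m : nat) : list nat := map (qg x q) (seq 1 m).

Fixpoint lex_le (u v : list nat) : Prop :=
  match u, v with
  | nil, nil => True
  | a :: u', b :: v' => (a < b)%nat \/ (a = b /\ lex_le u' v')
  | _, _ => False
  end.

(* Main.v *)
Require Import Defs.
From Stdlib Require Import Reals Lra Lia ZArith List.
Open Scope R_scope.

Lemma best_le K s x q n : (best K s x q n <= K)%nat.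
Proof. induction K; simpl; [lia|]. destruct Rlt_dec; lia. Qed.

Lemma best_max K d s x q n : (d <= K)%nat -> s + INR d / q ^ n < x ->
  (d <= best K s x q n)%nat.
Proof.
  induction K; intros Hd Hs; simpl; [lia|].
  destruct Rlt_dec as [H|H]; [lia|].
  destruct (Nat.eq_dec d (S K)) as [->|]; [contradiction|]. specialize (IHK ltac:(lia) Hs). lia.
Qed.

Lemma best_lt K s x q n : s < x -> s + INR (best K s x q n) / q ^ n < x.
Proof.
  induction K; intros Hs; simpl.
  - unfold Rdiv; rewrite Rmult_0_l; lra.
  - destruct Rlt_dec; auto.
Qed.

Lemma qg_sum_lt x q n : 0 < x -> qg_sum x q n < x.
Proof. intros Hx; induction n; simpl; [lra|]. apply best_lt; auto. Qed.

Lemma qg_le x q i : (qg x q i <= maxdig q)%nat.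
Proof. destruct i; simpl; [lia|]. destruct Req_EM_T; [lia|]. apply best_le. Qed.

Lemma qg_S x q n : x <> 0 -> qg x q (S n) = best (maxdig q) (qg_sum x q n) x q (S n).
Proof. intros H; simpl; destruct Req_EM_T; [contradiction|reflexivity]. Qed.

Fixpoint wsum (q : R) (k : nat) (b : list nat) : R :=
  match b with nil => 0 | d :: b' => INR d / q ^ (S k) + wsum q (S k) b' end.

Lemma wsum_ge0 q k b : 0 < q -> 0 <= wsum q k b.
Proof.
  intros Hq; revert k; induction b; intros k; cbn [wsum]; [lra|].
  specialize (IHb (S k)). assert (0 <= INR a / q ^ S k).
  { unfold Rdiv; apply Rmult_le_pos; [apply pos_INR|left; apply Rinv_0_lt_compat, pow_lt; auto]. }
  lra.
Qed.

Lemma wsum_mono q r k b : 0 < r -> r <= q -> wsum q k b <= wsum r k b.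
Proof.
  intros Hr Hrq; revert k; induction b; intros k; cbn [wsum]; [lra|].
  specialize (IHb (S k)). assert (INR a / q ^ S k <= INR a / r ^ S k).
  { unfold Rdiv; apply Rmult_le_compat_l; [apply pos_INR|].
    apply Rinv_le_contravar; [apply pow_lt; auto|]. apply pow_incr; lra. }
  lra.
Qed.

Lemma wsum_qg x q k m : x <> 0 ->
  qg_sum x q k + wsum q k (map (qg x q) (seq (S k) m)) = qg_sum x q (k + m).
Proof.
  intros Hx; revert k; induction m; intros k; simpl.
  - rewrite Nat.add_0_r; lra.
  - rewrite <- Nat.add_succ_comm, <- IHm. cbn [map wsum qg_sum].
    destruct Req_dec_T; [contradiction|]. simpl; lra.
Qed.

Lemma L x q b k : 0 < q -> x <> 0 -> (forall d, In d b -> (d <= maxdig q)%nat) ->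
  qg_sum x q k + wsum q k b < x ->
  lex_le b (map (qg x q) (seq (S k) (length b))).
Proof.
  intros Hq Hx; revert k; induction b as [|d b IH]; intros k Hd Hs; [simpl; auto|].
  cbn [length seq map lex_le]. rewrite qg_S by auto.
  assert (Hle : (d <= best (maxdig q) (qg_sum x q k) x q (S k))%nat).
  { apply best_max; [apply Hd; simpl; auto|]. simpl in Hs.
    cbn [wsum] in Hs. pose proof (wsum_ge0 q (S k) b Hq). cbn [pow] in *. lra. }
  destruct (Nat.eq_dec d (best (maxdig q) (qg_sum x q k) x q (S k))) as [E|]; [|left; lia].
  right; split; auto. apply IH.
  - intros; apply Hd; simpl; auto.
  - cbn [qg_sum]. rewrite <- E. cbn [wsum pow] in *. lra.
Qed.

Lemma lex_antisym u v : length u = length v -> lex_le u v -> lex_le v u -> u = v.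
Proof.
  revert v; induction u as [|a u IH]; intros [|b v]; simpl; try tauto; try discriminate.
  intros Hl [H1|[H1 H2]] [H3|[H3 H4]]; try lia. subst; f_equal; apply IH; auto.
Qed.

Lemma lex_zero x q l g : (forall i, In i l -> qg x q i = 0%nat) ->
  lex_le (map (qg x q) l) (map g l).
Proof.
  induction l as [|a l IH]; intros H; simpl; auto.
  rewrite H by (simpl; auto). destruct (g a) eqn:E; [right; split; auto|left; lia].
  apply IH; intros; apply H; simpl; auto.
Qed.

Lemma qg_zero q i : qg 0 q i = 0%nat.
Proof. destruct i; simpl; auto. destruct Req_EM_T; [auto|contradiction]. Qed.

Lemma ceil_ge r : r <= IZR (ceilR r).
Proof. unfold ceilR; rewrite minus_IZR; destruct (archimed (-r)); lra. Qed.
Lemma ceil_lt r : IZR (ceilR r) - 1 < r.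
Proof. unfold ceilR; rewrite minus_IZR; destruct (archimed (-r)); lra. Qed.
Lemma ceil_least r z : r <= IZR z -> (ceilR r <= z)%Z.
Proof.
  intros H. destruct (Z_le_gt_dec (ceilR r) z) as [|G]; auto.
  pose proof (ceil_lt r). assert (IZR (ceilR r) >= IZR (z+1)) by (apply IZR_ge; lia).
  rewrite plus_IZR in H1. lra.
Qed.
Lemma maxdig_mono q r : (ceilR q <= ceilR r)%Z -> (maxdig q <= maxdig r)%nat.
Proof. unfold maxdig; intros; lia. Qed.

Lemma wsum_cont b k q : 0 < q -> continuity_pt (fun r => wsum r k b) q.
Proof.
  intros Hq; revert k; induction b as [|d b IH]; intros k; simpl.
  - apply continuity_pt_const; intros ? ?; auto.
  - apply (continuity_pt_plus (fun r => INR d / r ^ S k) (fun r => wsum r (S k) b)); auto.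
    apply (continuity_pt_div (fun _ => INR d) (fun r => r ^ S k)).
    + apply continuity_pt_const; intros ? ?; auto.
    + apply derivable_continuous_pt, derivable_pt_pow.
    + apply pow_nonzero; lra.
Qed.

Lemma word_len x q m : length (qg_word x q m) = m.
Proof. unfold qg_word; rewrite length_map, length_seq; auto. Qed.

Lemma mono y r x q m : 0 <= y -> y <= x -> 1 < r -> r <= q ->
  lex_le (qg_word y r m) (qg_word x q m).
Proof.
  intros Hy0 Hyx Hr Hrq. unfold qg_word.
  destruct (Req_EM_T y 0) as [->|Hy].
  - apply lex_zero; intros; apply qg_zero.
  - replace (map (qg x q) (seq 1 m)) with (map (qg x q) (seq 1 (length (map (qg y r) (seq 1 m)))))
      by (rewrite length_map, length_seq; auto).
    apply L; [lra|lra| |].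
    + intros d Hd. apply in_map_iff in Hd. destruct Hd as [i [<- _]].
      eapply Nat.le_trans; [apply qg_le|]. apply maxdig_mono, ceil_least.
      pose proof (ceil_ge q); lra.
    + cbn [qg_sum]. pose proof (wsum_mono q r 0 (map (qg y r) (seq 1 m)) ltac:(lra) Hrq).
      pose proof (wsum_qg y r 0 m Hy). cbn [qg_sum] in H0.
      pose proof (qg_sum_lt y r (0 + m) ltac:(lra)). lra.
Qed.

Lemma nth_word x q i : (1 <= i)%nat -> nth (pred i) (qg_word x q i) 0%nat = qg x q i.
Proof.
  intros Hi. unfold qg_word. rewrite nth_indep with (d' := qg x q 0) by (rewrite length_map, length_seq; lia).
  rewrite map_nth, seq_nth by lia. f_equal; lia.
Qed.

Lemma part1 x q (HJ : inJ x q) : forall m : nat, (1 <= m)%nat ->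
     exists eps : R, 0 < eps /\
       forall y r : R, Rabs (y - x) < eps -> Rabs (r - q) < eps -> inJ y r ->
         lex_le (qg_word x q m) (qg_word y r m).
Proof.
  intros m _. destruct HJ as [Hq [Hx0 _]].
  destruct (Req_EM_T x 0) as [->|Hx].
  - exists 1; split; [lra|]. intros. unfold qg_word. apply lex_zero; intros; apply qg_zero.
  - set (w := qg_word x q m).
    assert (Hw : wsum q 0 w = qg_sum x q m).
    { pose proof (wsum_qg x q 0 m Hx). cbn [qg_sum] in H. rewrite Nat.add_0_l in H. unfold w, qg_word. lra. }
    set (c := x - qg_sum x q m).
    assert (Hc : 0 < c) by (unfold c; pose proof (qg_sum_lt x q m ltac:(lra)); lra).
    destruct (wsum_cont w 0 q ltac:(lra) (c/2) ltac:(lra)) as [alp [Halp Hcont]].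
    pose proof (ceil_lt q) as Hcl.
    exists (Rmin alp (Rmin (c/2) (q - (IZR (ceilR q) - 1)))).
    split. { repeat apply Rmin_pos; lra. }
    intros y r Hyx Hrq [Hr [Hy0 _]].
    pose proof (Rmin_l alp (Rmin (c/2) (q - (IZR (ceilR q) - 1)))).
    pose proof (Rmin_r alp (Rmin (c/2) (q - (IZR (ceilR q) - 1)))).
    pose proof (Rmin_l (c/2) (q - (IZR (ceilR q) - 1))).
    pose proof (Rmin_r (c/2) (q - (IZR (ceilR q) - 1))).
    assert (Hws : wsum r 0 w < wsum q 0 w + c/2).
    { destruct (Req_EM_T r q) as [->|Hne]; [lra|].
      assert (Hd : Rabs (wsum r 0 w - wsum q 0 w) < c/2).
      { apply (Hcont r). split; [split; [exact I|auto]|]. simpl; unfold R_dist; lra. }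
      apply Rabs_def2 in Hd; lra. }
    apply Rabs_def2 in Hyx. apply Rabs_def2 in Hrq.
    pose proof (wsum_ge0 r 0 w ltac:(lra)).
    assert (Hcr : (ceilR q <= ceilR r)%Z).
    { destruct (Z_le_gt_dec (ceilR q) (ceilR r)) as [|G]; auto.
      assert (Hz : IZR (ceilR r) <= IZR (ceilR q - 1)) by (apply IZR_le; lia).
      rewrite minus_IZR in Hz. pose proof (ceil_ge r). lra. }
    assert (Hlen : length w = m) by apply word_len.
    assert (Hcx : c = x - qg_sum x q m) by reflexivity.
    replace (qg_word y r m) with (map (qg y r) (seq 1 (length w))) by (rewrite Hlen; reflexivity).
    apply L; [lra|lra| |].
    + intros d Hd. unfold w, qg_word in Hd. apply in_map_iff in Hd. destruct Hd as [i [<- _]].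
      eapply Nat.le_trans; [apply qg_le|]. apply maxdig_mono; auto.
    + cbn [qg_sum]. lra.
Qed.

Theorem lemma2p3 (x q : R) (HJ : inJ x q) :
  (forall m : nat, (1 <= m)%nat ->
     exists eps : R, 0 < eps /\
       forall y r : R, Rabs (y - x) < eps -> Rabs (r - q) < eps -> inJ y r ->
         lex_le (qg_word x q m) (qg_word y r m))
  /\
  (forall (ys rs : nat -> R),
     (forall n, inJ (ys n) (rs n)) ->
     (forall n, ys n <= x /\ rs n <= q) ->
     Un_cv ys x -> Un_cv rs q ->
     forall i : nat, (1 <= i)%nat ->
       exists N : nat, forall n : nat, (N <= n)%nat -> qg (ys n) (rs n) i = qg x q i).
Proof.
  split; [apply part1; auto|].
  intros ys rs HJn Hb Hy Hr i Hi.
  destruct (part1 x q HJ i Hi) as [eps [He Hle]].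
  destruct (Hy eps He) as [N1 HN1]. destruct (Hr eps He) as [N2 HN2].
  exists (Nat.max N1 N2). intros n Hn.
  specialize (HN1 n ltac:(lia)). specialize (HN2 n ltac:(lia)). unfold R_dist in *.
  pose proof (Hle _ _ HN1 HN2 (HJn n)) as H1.
  destruct (HJn n) as [Hrn [Hyn _]]. destruct (Hb n) as [Hb1 Hb2].
  pose proof (mono (ys n) (rs n) x q i Hyn Hb1 Hrn Hb2) as H2.
  assert (E : qg_word (ys n) (rs n) i = qg_word x q i).
  { apply lex_antisym; auto. rewrite !word_len; auto. }
  rewrite <- (nth_word _ _ _ Hi), E, nth_word; auto.
Qed.
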